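(* Let $Y$ be a compact metric ANR with metric $d$ and let $A\subseteq Y$ be a $\mathcal{Z}$-set. Equip $A\times[0,1]$ with the metric $\rho((z,s),(z',s'))=\max\{d(z,z'),|s-s'|\}$. Then for every $\epsilon>0$ there exist $\delta'>0$ and a continuous map $F: A\times[0,1]\to Y$ that is a $\delta'$-$\epsilon$-map.
   Context: A closed subset $A$ of an ANR $Y$ is a $\mathcal{Z}$-set if there exists a homotopy $H: Y\times[0,1]\to Y$ with $H_0=\mathrm{id}_Y$ and $H_t(Y)\subseteq Y-A$ for all $t>0$. A map $f:X\to Y$ between metric spaces is a $\delta$-$\epsilon$-map if for every subset $S\subseteq Y$ of diameter $\le\delta$, $f^{-1}(S)$ has diameter $\le\epsilon$. *)

(* Defs.v *)
From Stdlib Require Export Reals List.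
Open Scope R_scope.

Definition is_metric {X : Type} (d : X -> X -> R) : Prop :=
  (forall x y, 0 <= d x y) /\
  (forall x y, d x y = 0 <-> x = y) /\
  (forall x y, d x y = d y x) /\
  (forall x y z, d x z <= d x y + d y z).

Definition open_set {X : Type} (d : X -> X -> R) (U : X -> Prop) : Prop :=
  forall x, U x -> exists r, 0 < r /\ forall y, d x y < r -> U y.

Definition closed_set {X : Type} (d : X -> X -> R) (C : X -> Prop) : Prop :=
  open_set d (fun x => ~ C x).

Definition compact_space {X : Type} (d : X -> X -> R) : Prop :=
  forall (I : Type) (U : I -> X -> Prop),
    (forall i, open_set d (U i)) ->
    (forall x, exists i, U i x) ->
    exists l : list I, forall x, exists i, In i l /\ U i x.

Definition continuous_on {X Y : Type} (dX : X -> X -> R) (dY : Y -> Y -> R)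
  (D : X -> Prop) (f : X -> Y) : Prop :=
  forall x, D x -> forall eps, 0 < eps -> exists delta, 0 < delta /\
    forall x', D x' -> dX x x' < delta -> dY (f x) (f x') < eps.

Definition closed_embedding {Y M : Type} (dY : Y -> Y -> R) (dM : M -> M -> R)
  (e : Y -> M) : Prop :=
  continuous_on dY dM (fun _ => True) e /\
  (forall y y', e y = e y' -> y = y') /\
  (forall y eps, 0 < eps -> exists delta, 0 < delta /\
     forall y', dM (e y) (e y') < delta -> dY y y' < eps) /\
  closed_set dM (fun m => exists y, e y = m).

Definition ANR {Y : Type} (d : Y -> Y -> R) : Prop :=
  is_metric d /\
  forall (M : Type) (dM : M -> M -> R) (e : Y -> M),
    is_metric dM -> closed_embedding d dM e ->
    exists (U : M -> Prop) (r : M -> Y),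
      open_set dM U /\ (forall y, U (e y)) /\
      continuous_on dM d U r /\ (forall y, r (e y) = y).

Definition rho {X : Type} (d : X -> X -> R) (p q : X * R) : R :=
  Rmax (d (fst p) (fst q)) (Rabs (snd p - snd q)).

Definition unit_interval (t : R) : Prop := 0 <= t <= 1.

Definition Z_set {Y : Type} (d : Y -> Y -> R) (A : Y -> Prop) : Prop :=
  closed_set d A /\
  exists H : Y * R -> Y,
    continuous_on (rho d) d (fun p => unit_interval (snd p)) H /\
    (forall y, H (y, 0) = y) /\
    (forall y t, 0 < t <= 1 -> ~ A (H (y, t))).

Definition delta_eps_map {X Y : Type} (dX : X -> X -> R) (dY : Y -> Y -> R)
  (D : X -> Prop) (f : X -> Y) (delta eps : R) : Prop :=
  forall S : Y -> Prop,
    (forall p q, S p -> S q -> dY p q <= delta) ->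
    forall x x', D x -> D x' -> S (f x) -> S (f x') -> dX x x' <= eps.

(* Main.v *)
Require Import Defs.
From Stdlib Require Import Reals.
From Stdlib Require Import Lra Lia List Classical.
Open Scope R_scope.

Lemma list_min (I : Type) (l : list I) (Q : I -> R -> Prop) :
  (forall i, In i l -> exists r, 0 < r /\ Q i r) ->
  exists m, 0 < m /\ forall i, In i l -> exists r, m <= r /\ Q i r.
Proof.
  induction l as [|a l IH]; intros HQ.
  - exists 1; split; [lra| intros i []].
  - destruct IH as [m [Hm Hl]]. { intros; apply HQ; right; auto. }
    destruct (HQ a (or_introl eq_refl)) as [r [Hr Qr]].
    exists (Rmin m r); split. { apply Rmin_pos; auto. }
    intros i [<-|Hi].
    + exists r; split; [apply Rmin_r| auto].
    + destruct (Hl i Hi) as [r' [Hr' Q']]; exists r'; split; auto.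
      eapply Rle_trans; [apply Rmin_l| auto].
Qed.

Lemma ball_open (Y : Type) (d : Y -> Y -> R) (Hd : is_metric d) (y : Y) (r : R) :
  Defs.open_set d (fun w => d y w < r).
Proof.
  destruct Hd as [H0 [Heq [Hsym Htri]]].
  intros x Hx. exists (r - d y x). split; [lra|].
  intros w Hw. pose proof (Htri y x w). lra.
Qed.

Lemma HB (a b : R) (L : R -> R -> Prop) : a <= b ->
  (forall t, a <= t <= b -> exists r, 0 < r /\ L t r) ->
  exists l : list (R*R), (forall p, In p l -> 0 < snd p /\ L (fst p) (snd p)) /\
    forall t, a <= t <= b -> exists p, In p l /\ Rabs (t - fst p) < snd p.
Proof.
  intros Hab Hloc.
  set (P := fun x => exists l : list (R*R), (forall p, In p l -> 0 < snd p /\ L (fst p) (snd p)) /\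
    forall t, a <= t <= x -> exists p, In p l /\ Rabs (t - fst p) < snd p).
  set (E := fun x => a <= x <= b /\ P x).
  assert (Ea : E a).
  { split; [lra|]. destruct (Hloc a ltac:(lra)) as [r [Hr La]].
    exists ((a,r)::nil). split.
    - intros p [<-|[]]; simpl; auto.
    - intros t Ht. exists (a,r); split; [left; auto|]. simpl.
      replace (t - a) with 0 by lra. rewrite Rabs_R0; auto. }
  assert (Hb : bound E). { exists b. intros x [Hx _]; lra. }
  destruct (completeness E Hb (ex_intro _ a Ea)) as [s [Hub Hlub]].
  assert (Has : a <= s) by (apply Hub; auto).
  assert (Hsb : s <= b). { apply Hlub. intros x [Hx _]; lra. }
  destruct (Hloc s ltac:(lra)) as [r [Hr Ls]].
  destruct (classic (exists x, E x /\ s - r < x)) as [[x [[Hx [l [Hl Hcov]]] Hxs]]|Hno].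
  2:{ exfalso. assert (s <= s - r); [|lra]. apply Hlub. intros x Ex.
      destruct (Rle_dec x (s - r)) as [|n]; auto. exfalso; apply Hno; exists x; split; auto; lra. }
  assert (Ey : E (Rmin (s + r/2) b)).
  { split. { split. apply Rmin_glb; lra. apply Rmin_r. }
    exists ((s,r)::l). split.
    - intros p [<-|Hp]; simpl; auto.
    - intros t Ht. destruct (Rle_dec t x).
      + destruct (Hcov t ltac:(lra)) as [p [Hp Hpt]]. exists p; split; [right|]; auto.
      + exists (s,r); split; [left; auto|]. simpl.
        assert (t <= s + r/2) by (eapply Rle_trans; [apply Ht| apply Rmin_l]).
        apply Rabs_def1; lra. }
  destruct (Rle_dec (s + r/2) b) as [Hle|Hle].
  - rewrite Rmin_left in Ey by auto. pose proof (Hub _ Ey). lra.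
  - rewrite Rmin_right in Ey by lra. destruct Ey as [_ HP]. exact HP.
Qed.

Lemma K1 (Y : Type) (d : Y -> Y -> R) (H : Y * R -> Y) (Hd : is_metric d)
  (Hc : compact_space d)
  (HH : continuous_on (rho d) d (fun p => unit_interval (snd p)) H)
  (H0 : forall y, H (y, 0) = y) :
  forall al, 0 < al -> exists tau, 0 < tau /\ tau <= 1 /\
    forall y t, 0 <= t <= tau -> d (H (y, t)) y < al.
Proof.
  intros al Hal. pose proof Hd as [Hd0 [Hdeq [Hsym Htri]]].
  set (I := {p : Y * R | 0 < snd p /\ forall q : Y * R, unit_interval (snd q) ->
             rho d (fst p, 0) q < snd p -> d (fst p) (H q) < al / 2}).
  set (U := fun (i : I) (w : Y) => d (fst (proj1_sig i)) w < snd (proj1_sig i) / 2).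
  destruct (Hc I U) as [l Hl].
  - intros i. apply ball_open; auto.
  - intros w. destruct (HH (w, 0) ltac:(unfold unit_interval; simpl; lra) (al/2) ltac:(lra))
      as [dl [Hdl Hcont]].
    rewrite H0 in Hcont.
    exists (exist _ (w, dl) (conj Hdl Hcont)). unfold U; simpl.
    assert (d w w = 0) by (apply Hdeq; auto). lra.
  - destruct (list_min I l (fun i r => r <= snd (proj1_sig i) / 2)) as [m [Hm Hml]].
    { intros i _. exists (snd (proj1_sig i) / 2). destruct (proj2_sig i) as [Hp _].
      split; [lra|lra]. }
    exists (Rmin m 1). split; [apply Rmin_pos; lra|]. split; [apply Rmin_r|].
    intros y t Ht. destruct (Hl y) as [i [Hi Ui]]. unfold U in Ui.
    destruct (Hml i Hi) as [r [Hmr Hr]].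
    destruct i as [[yi di] [Hdi Hci]]; simpl in *.
    assert (Htm : t <= m) by (pose proof (Rmin_l m 1); lra).
    assert (A1 : d yi (H (y, t)) < al / 2).
    { apply Hci. unfold unit_interval; simpl. pose proof (Rmin_r m 1); lra.
      unfold rho; simpl. apply Rmax_lub_lt; [lra|].
      rewrite Rabs_minus_sym, Rminus_0_r, Rabs_right by lra. lra. }
    assert (A2 : d yi (H (y, 0)) < al / 2).
    { apply Hci. unfold unit_interval; simpl; lra.
      unfold rho; simpl. apply Rmax_lub_lt; [lra|].
      rewrite Rminus_0_r, Rabs_R0. lra. }
    rewrite H0 in A2. pose proof (Htri (H (y,t)) yi y). rewrite (Hsym (H (y,t)) yi) in *. lra.
Qed.

Lemma K2 (Y : Type) (d : Y -> Y -> R) (A : Y -> Prop) (H : Y * R -> Y) (Hd : is_metric d)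
  (Hc : compact_space d) (Hcl : Defs.closed_set d A)
  (HH : continuous_on (rho d) d (fun p => unit_interval (snd p)) H)
  (HA : forall y t, 0 < t <= 1 -> ~ A (H (y, t))) :
  forall a, 0 < a <= 1 -> exists eta, 0 < eta /\
    forall y t z, a <= t <= 1 -> A z -> eta <= d (H (y, t)) z.
Proof.
  intros a Ha. pose proof Hd as [Hd0 [Hdeq [Hsym Htri]]].
  assert (StepA : forall y, exists m, 0 < m /\ forall y' t z, d y y' < m -> a <= t <= 1 -> A z ->
             m <= d (H (y', t)) z).
  { intros y.
    destruct (HB a 1 (fun t dl => exists r, 0 < r /\ (forall w, d (H (y,t)) w < r -> ~ A w) /\
       forall q, unit_interval (snd q) -> rho d (y, t) q < dl -> d (H (y,t)) (H q) < r / 2))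
      as [l [Hl Hcov]]; [lra| |].
    - intros t Ht. destruct (Hcl (H (y,t)) (HA y t ltac:(lra))) as [r [Hr Hball]].
      destruct (HH (y,t) ltac:(unfold unit_interval; simpl; lra) (r/2) ltac:(lra)) as [dl [Hdl Hct]].
      exists dl; split; auto. exists r; split; auto.
    - destruct (list_min _ l (fun p m => m <= snd p /\ exists r, 0 < r /\ m <= r / 2 /\
         (forall w, d (H (y, fst p)) w < r -> ~ A w) /\
         forall q, unit_interval (snd q) -> rho d (y, fst p) q < snd p -> d (H (y, fst p)) (H q) < r / 2))
        as [m [Hm Hml]].
      { intros p Hp. destruct (Hl p Hp) as [Hp0 [r [Hr [Hb Hct]]]].
        exists (Rmin (snd p) (r/2)). split; [apply Rmin_pos; lra|].
        split; [apply Rmin_l|]. exists r; split; auto. split; [apply Rmin_r|]. auto. }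
      exists m; split; auto. intros y' t z Hyy Ht Az.
      destruct (Hcov t Ht) as [p [Hp Hpt]].
      destruct (Hml p Hp) as [r' [Hmr [Hsp [r [Hr [Hmr2 [Hb Hct]]]]]]].
      assert (C1 : d (H (y, fst p)) (H (y', t)) < r / 2).
      { apply Hct. unfold unit_interval; simpl; lra.
        unfold rho; simpl. apply Rmax_lub_lt; [lra|]. rewrite Rabs_minus_sym. lra. }
      assert (C2 : r <= d (H (y, fst p)) z).
      { destruct (Rle_dec r (d (H (y, fst p)) z)) as [|n]; auto. exfalso.
        apply (Hb z); auto. lra. }
      pose proof (Htri (H (y, fst p)) (H (y', t)) z). lra. }
  set (I := {p : Y * R | 0 < snd p /\ forall y' t z, d (fst p) y' < snd p -> a <= t <= 1 -> A z ->
             snd p <= d (H (y', t)) z}).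
  set (U := fun (i : I) (w : Y) => d (fst (proj1_sig i)) w < snd (proj1_sig i)).
  destruct (Hc I U) as [l Hl].
  - intros i. apply ball_open; auto.
  - intros w. destruct (StepA w) as [m [Hm Hmp]].
    exists (exist _ (w, m) (conj Hm Hmp)). unfold U; simpl.
    assert (d w w = 0) by (apply Hdeq; auto). lra.
  - destruct (list_min I l (fun i r => r <= snd (proj1_sig i))) as [m [Hm Hml]].
    { intros i _. exists (snd (proj1_sig i)). destruct (proj2_sig i) as [Hp _]. split; lra. }
    exists m; split; auto. intros y t z Ht Az.
    destruct (Hl y) as [i [Hi Ui]]. unfold U in Ui.
    destruct (Hml i Hi) as [r [Hmr Hr]].
    destruct i as [[yi di] [Hdi Hci]]; simpl in *.
    pose proof (Hci y t z Ui Ht Az). lra.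
Qed.

Lemma Key (Y : Type) (d : Y -> Y -> R) (A : Y -> Prop) (H : Y * R -> Y) (Hd : is_metric d)
  (Hc : compact_space d) (Hcl : Defs.closed_set d A)
  (HH : continuous_on (rho d) d (fun p => unit_interval (snd p)) H)
  (H0 : forall y, H (y, 0) = y)
  (HA : forall y t, 0 < t <= 1 -> ~ A (H (y, t))) :
  forall a, 0 < a <= 1 -> exists b, 0 < b /\ b < a /\ exists g, 0 < g /\
    forall z y t t', A z -> 0 <= t <= b -> a <= t' <= 1 -> g <= d (H (z, t)) (H (y, t')).
Proof.
  intros a Ha. pose proof Hd as [Hd0 [Hdeq [Hsym Htri]]].
  destruct (K2 Y d A H Hd Hc Hcl HH HA a Ha) as [eta [Heta Hfar]].
  destruct (K1 Y d H Hd Hc HH H0 (eta/2) ltac:(lra)) as [tau [Htau [Htau1 Hnear]]].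
  exists (Rmin tau (a/2)). split; [apply Rmin_pos; lra|]. split.
  { pose proof (Rmin_r tau (a/2)); lra. }
  exists (eta/2); split; [lra|]. intros z y t t' Az Ht Ht'.
  pose proof (Hfar y t' z Ht' Az).
  assert (d (H (z,t)) z < eta/2). { apply Hnear. pose proof (Rmin_l tau (a/2)); lra. }
  pose proof (Htri (H (y,t')) (H (z,t)) z). rewrite (Hsym (H (y,t')) (H (z,t))) in *. lra.
Qed.

Lemma SEQ (Y : Type) (d : Y -> Y -> R) (A : Y -> Prop) (H : Y * R -> Y)
  (Key : forall a, 0 < a <= 1 -> exists b, 0 < b /\ b < a /\ exists g, 0 < g /\
    forall z y t t', A z -> 0 <= t <= b -> a <= t' <= 1 -> g <= d (H (z, t)) (H (y, t')))
  (tau : R) (Htau : 0 < tau <= 1) :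
  forall n, exists (c : nat -> R) g, 0 < g /\ c O = tau /\
    (forall m, (m <= n)%nat -> 0 < c m /\ c m <= tau) /\
    (forall m, (m < n)%nat -> c (S m) <= c m) /\
    (forall m, (m < n)%nat -> forall z y t t', A z -> 0 <= t <= c (S m) -> c m <= t' <= 1 ->
        g <= d (H (z, t)) (H (y, t'))).
Proof.
  induction n as [|n IH].
  - exists (fun _ => tau), 1. repeat split; try lra; intros m Hm; try lia.
  - destruct IH as [c [g [Hg [Hc0 [Hpos [Hmono Hsep]]]]]].
    destruct (Hpos n (le_n n)) as [Hcn Hcn'].
    destruct (Key (c n) ltac:(lra)) as [b [Hb [Hbc [g' [Hg' Hsep']]]]].
    exists (fun m => if Nat.eq_dec m (S n) then b else c m), (Rmin g g').
    split; [apply Rmin_pos; auto|]. split.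
    { destruct (Nat.eq_dec 0 (S n)); [lia|auto]. }
    split; [|split].
    + intros m Hm. destruct (Nat.eq_dec m (S n)); [lra|]. apply Hpos; lia.
    + intros m Hm. destruct (Nat.eq_dec (S m) (S n)); destruct (Nat.eq_dec m (S n)); try lia.
      * assert (m = n) by lia; subst; lra.
      * apply Hmono; lia.
    + intros m Hm z y t t' Az Ht Ht'.
      destruct (Nat.eq_dec (S m) (S n)); destruct (Nat.eq_dec m (S n)); try lia.
      * assert (m = n) by lia; subst.
        pose proof (Hsep' z y t t' Az Ht Ht'). pose proof (Rmin_r g g'); lra.
      * pose proof (Hsep m ltac:(lia) z y t t' Az Ht Ht'). pose proof (Rmin_l g g'); lra.
Qed.

Definition clamp (x : R) : R := Rmax 0 (Rmin 1 x).

Lemma clamp_bounds x : 0 <= clamp x <= 1.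
Proof. unfold clamp, Rmax, Rmin; repeat destruct Rle_dec; lra. Qed.
Lemma clamp_1 x : 1 <= x -> clamp x = 1.
Proof. intros; unfold clamp, Rmax, Rmin; repeat destruct Rle_dec; lra. Qed.
Lemma clamp_0 x : x <= 0 -> clamp x = 0.
Proof. intros; unfold clamp, Rmax, Rmin; repeat destruct Rle_dec; lra. Qed.
Lemma clamp_lip x y : Rabs (clamp x - clamp y) <= Rabs (x - y).
Proof. unfold clamp, Rmax, Rmin; repeat destruct Rle_dec; split_Rabs; lra. Qed.

Fixpoint psi (c : nat -> R) (k : nat) (v : R) : R :=
  match k with
  | O => c O
  | S k' => psi c k' v - (c k' - c (S k')) * clamp (v - INR k')
  end.

Lemma psi_bounds c k v : (forall m, (m < k)%nat -> c (S m) <= c m) ->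
  c k <= psi c k v <= c O.
Proof.
  induction k as [|k IH]; intros Hm; simpl; [lra|].
  destruct IH as [I1 I2]. { intros; apply Hm; lia. }
  pose proof (Hm k (le_n _)). pose proof (clamp_bounds (v - INR k)). nra.
Qed.

Lemma psi_high c j v : INR j <= v -> psi c j v = c j.
Proof.
  induction j as [|j IH]; intros Hv; simpl; auto.
  rewrite S_INR in Hv. rewrite IH by (pose proof (pos_INR j); lra).
  rewrite clamp_1 by lra. ring.
Qed.

Lemma psi_mono c j v : forall i, (forall m, (m < j + i)%nat -> c (S m) <= c m) ->
  psi c (j + i) v <= psi c j v.
Proof.
  induction i as [|i IH]; intros Hm.
  - rewrite Nat.add_0_r; lra.
  - rewrite Nat.add_succ_r. simpl.
    assert (psi c (j + i) v <= psi c j v) by (apply IH; intros; apply Hm; lia).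
    pose proof (Hm (j+i)%nat ltac:(lia)). pose proof (clamp_bounds (v - INR (j+i))). nra.
Qed.

Lemma psi_low c m v : v <= INR m -> forall i, psi c (m + i) v = psi c m v.
Proof.
  intros Hv. induction i as [|i IH].
  - rewrite Nat.add_0_r; auto.
  - rewrite Nat.add_succ_r. simpl. rewrite IH.
    assert (INR m <= INR (m + i)) by (apply le_INR; lia).
    rewrite clamp_0 by lra. ring.
Qed.

Lemma psi_lip c k v v' : (forall m, (m < k)%nat -> c (S m) <= c m) ->
  Rabs (psi c k v - psi c k v') <= (c O - c k) * Rabs (v - v').
Proof.
  induction k as [|k IH]; intros Hm; simpl.
  - replace (c O - c O) with 0 by ring. rewrite Rabs_R0. lra.
  - assert (IH' := IH ltac:(intros; apply Hm; lia)).
    pose proof (Hm k (le_n _)) as Hk.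
    pose proof (clamp_lip (v - INR k) (v' - INR k)) as Hcl.
    replace (v - INR k - (v' - INR k)) with (v - v') in Hcl by ring.
    replace (psi c k v - (c k - c (S k)) * clamp (v - INR k) -
       (psi c k v' - (c k - c (S k)) * clamp (v' - INR k)))
      with ((psi c k v - psi c k v') - (c k - c (S k)) * (clamp (v - INR k) - clamp (v' - INR k))) by ring.
    set (X := psi c k v - psi c k v') in *.
    set (Cd := clamp (v - INR k) - clamp (v' - INR k)) in *.
    pose proof (Rabs_triang X (- ((c k - c (S k)) * Cd))) as T.
    rewrite Rabs_Ropp, Rabs_mult, (Rabs_right (c k - c (S k))) in T by lra.
    unfold Rminus at 1. pose proof (Rabs_pos (v - v')).
    assert ((c k - c (S k)) * Rabs Cd <= (c k - c (S k)) * Rabs (v - v')) by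
      (apply Rmult_le_compat_l; lra).
    nra.
Qed.

Lemma floor_nat : forall N : nat, forall x, 0 <= x < INR N -> exists k : nat, INR k <= x < INR k + 1.
Proof.
  induction N as [|N IH]; intros x Hx.
  - simpl in Hx; lra.
  - rewrite S_INR in Hx. destruct (Rlt_dec x (INR N)).
    + apply IH; lra.
    + exists N; lra.
Qed.

Theorem mainTheorem4 (Y : Type) (d : Y -> Y -> R) (A : Y -> Prop) :
  ANR d -> compact_space d -> Z_set d A ->
  forall eps, 0 < eps ->
  exists (delta' : R) (F : Y * R -> Y),
    0 < delta' /\
    continuous_on (rho d) d (fun p => A (fst p) /\ unit_interval (snd p)) F /\
    delta_eps_map (rho d) d (fun p => A (fst p) /\ unit_interval (snd p)) F delta' eps.
Proof.
  intros [Hd _] Hc [Hcl [H [HH [H0 HA]]]] eps Heps.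
  pose proof Hd as [Hd0 [Hdeq [Hsym Htri]]].
  destruct (K1 Y d H Hd Hc HH H0 (eps/4) ltac:(lra)) as [tau [Htau [Htau1 Hnear]]].
  destruct (archimed_cor1 (eps/2) ltac:(lra)) as [n [Hn Hn0]].
  assert (Hnpos : 0 < INR n) by (apply lt_0_INR; auto).
  assert (Hne : 2 < INR n * eps).
  { apply (Rmult_lt_compat_l (INR n)) in Hn; auto. rewrite Rinv_r in Hn by lra. lra. }
  destruct (SEQ Y d A H (Key Y d A H Hd Hc Hcl HH H0 HA) tau ltac:(lra) n)
    as [c [g [Hg [Hc0 [Hcpos [Hcmono Hsep]]]]]].
  set (phi := fun s => psi c n (INR n * (1 - s))).
  assert (Hphi : forall s, 0 <= phi s <= tau).
  { intros s. unfold phi. destruct (psi_bounds c n (INR n * (1 - s)) Hcmono).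
    destruct (Hcpos n (le_n _)). lra. }
  assert (Hlip : forall s s', Rabs (phi s - phi s') <= INR n * Rabs (s - s')).
  { intros s s'. unfold phi. eapply Rle_trans; [apply psi_lip; auto|].
    replace (INR n * (1 - s) - INR n * (1 - s')) with (INR n * (s' - s)) by ring.
    rewrite Rabs_mult, (Rabs_right (INR n)) by lra. rewrite Rabs_minus_sym.
    destruct (Hcpos n (le_n _)). pose proof (Rabs_pos (s - s')).
    rewrite <- (Rmult_1_l (INR n * Rabs (s - s'))) at 2. apply Rmult_le_compat_r; [apply Rmult_le_pos; lra|lra]. }
  assert (Gen : forall z z' s s', A z -> 0 <= s <= 1 -> 0 <= s' <= 1 -> eps < s' - s ->
             g <= d (H (z, phi s)) (H (z', phi s'))).
  { intros z z' s s' Az Hs Hs' Hss.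
    set (v := INR n * (1 - s)). set (v' := INR n * (1 - s')).
    assert (Hvv : 2 < v - v').
    { unfold v, v'. replace (INR n * (1 - s) - INR n * (1 - s')) with (INR n * (s' - s)) by ring.
      assert (INR n * eps < INR n * (s' - s)) by (apply Rmult_lt_compat_l; lra). lra. }
    assert (Hv' : 0 <= v' <= INR n) by (unfold v'; nra).
    assert (Hv : v <= INR n) by (unfold v; nra).
    destruct (floor_nat (S n) v') as [k [Hk1 Hk2]]. { rewrite S_INR; lra. }
    assert (HSk : INR (S (S k)) < v) by (rewrite !S_INR; lra).
    assert (Hkn : (S (S k) < n)%nat \/ S (S k) = n).
    { destruct (Compare_dec.le_lt_dec (S (S k)) n) as [|Hlt]; [lia|].
      apply lt_INR in Hlt. lra. }
    assert (Hkn' : (S k < n)%nat) by lia.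
    apply (Hsep (S k) Hkn' z z' (phi s) (phi s') Az).
    - split; [apply Hphi|]. unfold phi; fold v.
      replace n with (S (S k) + (n - S (S k)))%nat by lia.
      eapply Rle_trans; [apply psi_mono|].
      + intros m Hm; apply Hcmono; lia.
      + rewrite psi_high by lra. lra.
    - split; [|pose proof (Hphi s'); lra]. unfold phi; fold v'.
      replace n with (S k + (n - S k))%nat by lia.
      rewrite psi_low by (rewrite S_INR; lra).
      apply psi_bounds. intros m Hm; apply Hcmono; lia. }
  exists (Rmin (eps/2) (g/2)), (fun p => H (fst p, phi (snd p))).
  split; [apply Rmin_pos; lra|]. split.
  - intros [z s] [Az Is] e He. simpl.
    destruct (HH (z, phi s) ltac:(unfold unit_interval; simpl; pose proof (Hphi s); lra) e He)
      as [dl [Hdl Hct]].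
    exists (dl / (INR n + 1)). split; [apply Rdiv_lt_0_compat; lra|].
    intros [z' s'] [Az' Is'] Hr. simpl.
    assert (Hr' : rho d (z, s) (z', s') * (INR n + 1) < dl).
    { apply (Rmult_lt_compat_r (INR n + 1)) in Hr; [|lra]. unfold Rdiv in Hr.
      rewrite Rmult_assoc, Rinv_l, Rmult_1_r in Hr by lra. lra. }
    unfold rho in Hr'; simpl in Hr'.
    pose proof (Rmax_l (d z z') (Rabs (s - s'))). pose proof (Rmax_r (d z z') (Rabs (s - s'))).
    pose proof (Hd0 z z'). pose proof (Rabs_pos (s - s')).
    apply Hct. unfold unit_interval; simpl; pose proof (Hphi s'); lra.
    unfold rho; simpl. apply Rmax_lub_lt.
    + nra.
    + pose proof (Hlip s s'). nra.
  - intros S HS [z s] [z' s'] [Az Is] [Az' Is'] HSx HSx'. simpl in *.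
    pose proof (HS _ _ HSx HSx') as Hdist.
    pose proof (Rmin_l (eps/2) (g/2)). pose proof (Rmin_r (eps/2) (g/2)).
    unfold unit_interval in *.
    unfold rho; simpl. apply Rmax_lub.
    + assert (N1 : d (H (z, phi s)) z < eps/4) by (apply Hnear; apply Hphi).
      assert (N2 : d (H (z', phi s')) z' < eps/4) by (apply Hnear; apply Hphi).
      pose proof (Htri z (H (z, phi s)) z'). pose proof (Htri (H (z, phi s)) (H (z', phi s')) z').
      rewrite (Hsym z (H (z, phi s))) in *. lra.
    + apply Rabs_le. split.
      * destruct (Rle_dec (- eps) (s - s')) as [|Hn']; auto. exfalso.
        pose proof (Gen z z' s s' Az Is Is' ltac:(lra)). lra.
      * destruct (Rle_dec (s - s') eps) as [|Hn']; auto. exfalso.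
        pose proof (Gen z' z s' s Az' Is' Is ltac:(lra)). rewrite Hsym in Hdist. lra.
Qed.
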